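(* In the Setting, it cannot hold simultaneously that $r=\sqrt{K-\lambda_1}$, $r+s=\sqrt{K^2-\lambda_2V}$, $s=-\sqrt{K^2-\lambda_2V}$, $f_2=0$, $f_1=f-c+1$, $g_1=c-1$ and $g_2=g-c$.
   Context: Setting: $\Gamma$ is a primitive strongly regular graph with parameters $(v,k,\lambda,\mu)$ (a $k$-regular graph on $v$ vertices, any two adjacent vertices having $\lambda$ and any two distinct non-adjacent vertices having $\mu$ common neighbours; primitive means $\Gamma$ and its complement are connected), with spectrum $k^1, r^f, s^g$ where $k>r>s$ and exponents are multiplicities. $C$ is a coclique in $\Gamma$ of size $c=\frac{vs}{s-k}$. A $K$-regular graph on $V$ vertices, neither complete nor edgeless, is a divisible design graph with parameters $(V,K,\lambda_1,\lambda_2;m,n)$ if its vertex set can be partitioned into $m$ canonical classes of size $n$ such that two distinct vertices in the same class have exactly $\lambda_1$ common neighbours and two vertices in different classes have exactly $\lambda_2$ common neighbours; it is proper unless $m=1$, $n=1$ or $\lambda_1=\lambda_2$. It is assumed that the subgraph $\Delta$ induced on $V(\Gamma)\setminus C$ is a proper divisible design graph with parameters $(V,K,\lambda_1,\lambda_2;m,n)$. Let $A$ be the adjacency matrix of $\Delta$, $W$ the space of vectors constant on each canonical class and $\mathbf{1}$ the all-ones vector. It is known that $A$ acts on $W^\perp$ with eigenvalues $\pm\sqrt{K-\lambda_1}$, whose multiplicities are denoted $f_1$ (for $+$) and $f_2$ (for $-$), with $f_1+f_2=m(n-1)$, and on $W\cap\mathbf{1}^\perp$ with eigenvalues $\pm\sqrt{K^2-\lambda_2V}$,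 with multiplicities $g_1$ (for $+$) and $g_2$ (for $-$), $g_1+g_2=m-1$. It is also known that the spectrum of $\Delta$ is $(k+s)^1, r^{f-c+1}, (r+s)^{c-1}, s^{g-c}$, with $c<g$. *)

(* Defs.v *)
From HB Require Import structures.
From mathcomp Require Import all_boot all_order all_algebra.
Set Implicit Arguments. Unset Strict Implicit. Unset Printing Implicit Defensive.
Import Order.TTheory GRing.Theory Num.Theory.
Local Open Scope ring_scope.

Definition is_graph (T : finType) (e : rel T) : Prop :=
  (forall x, ~~ e x x) /\ (forall x y, e x y = e y x).

Definition nbrs_in (T : finType) (e : rel T) (S : {set T}) (x : T) : {set T} :=
  [set z in S | e x z].

Definition common_in (T : finType) (e : rel T) (S : {set T}) (x y : T) : nat :=
  #|[set z in S | e x z && e y z]|.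

Definition srg (T : finType) (e : rel T) (v k lam mu : nat) : Prop :=
  [/\ #|T| = v,
      (forall x, #|nbrs_in e setT x| = k),
      (forall x y, x != y -> e x y -> common_in e setT x y = lam) &
      (forall x y, x != y -> ~~ e x y -> common_in e setT x y = mu)]%N.

Definition complement_rel (T : finType) (e : rel T) : rel T :=
  [rel x y | (x != y) && ~~ e x y].

Definition primitive (T : finType) (e : rel T) : Prop :=
  (forall x y, connect e x y) /\ (forall x y, connect (complement_rel e) x y).

Definition coclique (T : finType) (e : rel T) (C : {set T}) : Prop :=
  forall x y, x \in C -> y \in C -> ~~ e x y.

Definition ddg (T : finType) (e : rel T) (S : {set T})
    (V K l1 l2 m n : nat) (P : {set {set T}}) : Prop :=
  [/\ [/\ #|S| = V,
      (forall x, x \in S -> #|nbrs_in e S x| = K),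
      (exists x y, [/\ x \in S, y \in S, x != y & ~~ e x y]) &
      (exists x y, [/\ x \in S, y \in S & e x y]) ],
      [/\ partition P S, #|P| = m & forall B, B \in P -> #|B| = n],
      (forall x y, x \in S -> y \in S -> x != y -> pblock P x = pblock P y ->
         common_in e S x y = l1) &
      (forall x y, x \in S -> y \in S -> pblock P x != pblock P y ->
         common_in e S x y = l2)]%N.

Definition proper_ddg (T : finType) (e : rel T) (S : {set T})
    (V K l1 l2 m n : nat) (P : {set {set T}}) : Prop :=
  ddg e S V K l1 l2 m n P /\ [/\ m <> 1, n <> 1 & l1 <> l2]%N.

Definition adjmx (R : nzRingType) (T : finType) (e : rel T) (S : {set T}) :
    'M[R]_#|S| :=
  \matrix_(i, j) (e (enum_val i) (enum_val j))%:R.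

(* Geometric multiplicity of theta as an eigenvalue of A (0 if not an eigenvalue).
   For symmetric real matrices this is the multiplicity in the spectrum. *)
Definition eigmult (R : fieldType) (N : nat) (A : 'M[R]_N) (theta : R) : nat :=
  \rank (eigenspace A theta).

(* Matrix whose row space is W: row for vertex i is the indicator of its class. *)
Definition Wmx (R : nzRingType) (T : finType) (S : {set T}) (P : {set {set T}}) :
    'M[R]_#|S| :=
  \matrix_(i, j) ((enum_val j : T) \in pblock P (enum_val i))%:R.

Definition Wperp (R : fieldType) (T : finType) (S : {set T}) (P : {set {set T}}) :=
  kermx (Wmx R S P)^T.

Definition onesperp (R : fieldType) (N : nat) :=
  kermx (const_mx 1 : 'M[R]_(N, 1)).

Definition multWperp (R : fieldType) (T : finType) (S : {set T})
    (P : {set {set T}}) (A : 'M[R]_#|S|) (theta : R) : nat :=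
  \rank (eigenspace A theta :&: Wperp R S P)%MS.

Definition multW1perp (R : fieldType) (T : finType) (S : {set T})
    (P : {set {set T}}) (A : 'M[R]_#|S|) (theta : R) : nat :=
  \rank (eigenspace A theta :&: (Wmx R S P :&: onesperp R #|S|))%MS.

(* Main.v *)
Require Import Defs.
From HB Require Import structures.
From mathcomp Require Import all_boot all_order all_algebra.
Import Order.TTheory GRing.Theory Num.Theory.
Local Open Scope ring_scope.
Lemma rankW_ge (F : fieldType) (T : finType) (S : {set T}) (P : {set {set T}}) (m : nat) :
  partition P S -> #|P| = m -> (m <= \rank (Wmx F S P))%N.
Proof.
move=> hP hm.
have /and3P[/eqP hcov htriv h0] := hP.
case: (set_0Vmem S) => [S0 | [x0 x0S]].
  suff -> : m = 0%N by [].
  rewrite -hm; apply/eqP; rewrite cards_eq0; apply/eqP/setP => B.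
  rewrite in_set0; apply/negP => BP.
  have [y yB] : exists y, y \in B.
    case: (set_0Vmem B) => [B0|[z zB]]; last by exists z.
    by move: h0; rewrite -B0 BP.
  have : y \in cover P by apply/bigcupP; exists B.
  by rewrite hcov S0 in_set0.
pose b (j : 'I_m) : {set T} := enum_val (cast_ord (esym hm) j).
have bP j : b j \in P by rewrite /b; apply: (enum_valP (cast_ord (esym hm) j)).
pose rp j := odflt x0 [pick y in b j].
have bne j : rp j \in b j.
  case: (set_0Vmem (b j)) => [B0|[y yb]].
    by move: h0; rewrite -B0 bP.
  rewrite /rp; case: pickP => [y' //|/(_ y)]; by rewrite yb.
have repS j : rp j \in S.
  by rewrite -hcov; apply/bigcupP; exists (b j).
pose idx j : 'I_#|S| := enum_rank_in x0S (rp j).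
have idxK j : enum_val (idx j) = rp j by rewrite /idx enum_rankK_in.
pose M : 'M[F]_(m, #|S|) := rowsub idx (Wmx F S P).
pose N : 'M[F]_(#|S|, m) := \matrix_(i, j) (i == idx j)%:R.
have MN : M *m N = 1%:M.
  apply/matrixP => j j'; rewrite !mxE.
  rewrite (bigD1 (idx j')) //= big1 => [|i /negbTE ni]; last by rewrite !mxE ni mulr0.
  rewrite !mxE eqxx mulr1 addr0 !idxK (def_pblock htriv (bP j) (bne j)).
  have bi : injective b.
    move=> a1 a2 /enum_val_inj /(congr1 val) /= /val_inj //.
  case: (eqVneq j j') => [->|njj]; first by rewrite bne.
  case hin0: (_ \in _) => //; move: hin0 => hin.
  have : b j' = b j.
    by rewrite -(def_pblock htriv (bP j') (bne j')) (def_pblock htriv (bP j) hin).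
  by move/bi => E; rewrite E eqxx in njj.
have := mxrankM_maxl M N; rewrite MN mxrank1 => h1.
apply: (leq_trans h1); apply: mxrankS; exact: rowsub_sub.
Qed.
Theorem mainTheorem3 (R : rcfType) (T : finType) (e : rel T)
    (v k lam mu f g : nat) (r s : R) (C : {set T}) (c : nat)
    (V K l1 l2 m n : nat) (P : {set {set T}}) :
  (* Gamma: primitive SRG(v,k,lam,mu) with spectrum k^1, r^f, s^g, k > r > s *)
  is_graph e -> srg e v k lam mu -> primitive e ->
  eigmult (adjmx R e setT) k%:R = 1%N ->
  eigmult (adjmx R e setT) r = f ->
  eigmult (adjmx R e setT) s = g ->
  (1 + f + g = v)%N ->
  r < k%:R -> s < r ->
  (* C: coclique of size c = v s / (s - k) *)
  coclique e C -> #|C| = c ->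
  c%:R = v%:R * s / (s - k%:R) ->
  (* Delta = Gamma \ C is a proper DDG(V,K,l1,l2;m,n) with classes P *)
  proper_ddg e (~: C) V K l1 l2 m n P ->
  (* known facts from the setting *)
  (multWperp P (adjmx R e (~: C)) (Num.sqrt (K%:R - l1%:R))
   + multWperp P (adjmx R e (~: C)) (- Num.sqrt (K%:R - l1%:R)) = m * (n - 1))%N ->
  (multW1perp P (adjmx R e (~: C)) (Num.sqrt (K%:R ^+ 2 - l2%:R * V%:R))
   + multW1perp P (adjmx R e (~: C)) (- Num.sqrt (K%:R ^+ 2 - l2%:R * V%:R))
     = m - 1)%N ->
  eigmult (adjmx R e (~: C)) (k%:R + s) = 1%N ->
  (eigmult (adjmx R e (~: C)) r)%:Z = f%:Z - c%:Z + 1 ->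
  (eigmult (adjmx R e (~: C)) (r + s))%:Z = c%:Z - 1 ->
  (eigmult (adjmx R e (~: C)) s)%:Z = g%:Z - c%:Z ->
  (c < g)%N ->
  (* conclusion *)
  ~ [/\ [/\ r = Num.sqrt (K%:R - l1%:R),
        r + s = Num.sqrt (K%:R ^+ 2 - l2%:R * V%:R) &
        s = - Num.sqrt (K%:R ^+ 2 - l2%:R * V%:R)],
        multWperp P (adjmx R e (~: C)) (- Num.sqrt (K%:R - l1%:R)) = 0%N,
        (multWperp P (adjmx R e (~: C)) (Num.sqrt (K%:R - l1%:R)))%:Z
          = f%:Z - c%:Z + 1,
        (multW1perp P (adjmx R e (~: C)) (Num.sqrt (K%:R ^+ 2 - l2%:R * V%:R)))%:Z
          = c%:Z - 1 &
        (multW1perp P (adjmx R e (~: C)) (- Num.sqrt (K%:R ^+ 2 - l2%:R * V%:R)))%:Z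
          = g%:Z - c%:Z].
Proof.
move=> hg _ _ _ _ _ _ _ hsr _ _ _ [hddg [_ hn1 _]] hWp _ _ _ _ _ _.
case=> [[hr hrs hs] hneg hpos _ _].
have [[hV hK [x0 [y0 [x0S _ _ _]]] _] [hP hm hn] _ _] := hddg.
set S := ~: C in hV hK x0S hP hWp hneg hpos *.
set A := adjmx R e S in hWp hneg hpos *.
rewrite -hr in hWp hneg hpos.
have rpos : 0 < r.
  have h1 : 0 <= r + s by rewrite hrs sqrtr_ge0.
  have h2 : 0 <= r by rewrite hr sqrtr_ge0.
  rewrite lt0r h2 andbT; apply/eqP => r0.
  by move: h1 hsr; rewrite r0 add0r => h1 /(le_lt_trans h1); rewrite ltxx.
rewrite hneg addn0 in hWp.
have /and3P[/eqP hcov htriv h0] := hP.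
have hSmn : #|S| = (m * n)%N.
  rewrite (card_partition hP) (eq_bigr (fun _ => n)) ?sum_nat_const ?hm //.
have hW := @rankW_ge R _ _ _ _ hP hm.
have hWperp : (Wperp R S P <= eigenspace A r)%MS.
  have sub : ((eigenspace A r :&: Wperp R S P) <= Wperp R S P)%MS by apply: capmxSr.
  suff E : (Wperp R S P <= eigenspace A r :&: Wperp R S P)%MS.
    exact: submx_trans E (capmxSl _ _).
  rewrite -(geq_leqif (mxrank_leqif_sup sub)).
  rewrite /multWperp in hWp; rewrite hWp /Wperp mxrank_ker mxrank_tr mulnBr muln1 -hSmn.
  by apply: leq_sub2l.
have x0c : x0 \in cover P by rewrite hcov.
set B := pblock P x0.
have BP : B \in P by exact: pblock_mem.
have x0B : x0 \in B by rewrite mem_pblock.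
have [w wB wx0] : exists2 w, w \in B & w != x0.
  have hB := hn _ BP.
  have : (0 < #|B :\ x0|)%N.
    move: hB; rewrite (cardsD1 x0 B) x0B => hB.
    rewrite lt0n; apply/eqP => h; apply: hn1; by rewrite -hB h.
  case/card_gt0P => z; rewrite !inE => /andP[zx0 zB]; by exists z.
have wc : w \in cover P by apply/bigcupP; exists B.
have wS : w \in S by rewrite -hcov.
have pw : pblock P w = B by apply: def_pblock.
pose iu := enum_rank_in x0S x0.
pose iw := enum_rank_in x0S w.
have iuK : enum_val iu = x0 by rewrite /iu enum_rankK_in.
have iwK : enum_val iw = w by rewrite /iw enum_rankK_in.
have iuw : iu != iw.
  by apply/eqP => E; move: wx0; rewrite -iwK -E iuK eqxx.
pose x : 'rV[R]_#|S| := delta_mx 0 iu - delta_mx 0 iw.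
have memp z y : z \in cover P -> y \in cover P ->
    (z \in pblock P y) = (y \in pblock P z).
  move=> zc yc; rewrite -(eq_pblock _ htriv yc) -(eq_pblock _ htriv zc).
  by rewrite eq_sym.
have xW : (x <= Wperp R S P)%MS.
  apply/sub_kermxP; rewrite /x mulmxBl -!rowE; apply/rowP => j.
  rewrite !mxE iuK iwK.
  have jc : enum_val j \in cover P by rewrite hcov; exact: enum_valP.
  by rewrite (memp _ _ x0c jc) (memp _ _ wc jc) pw subrr.
have /eigenspaceP hx := submx_trans xW hWperp.
have := congr1 (fun M : 'rV[R]_#|S| => M 0 iu) hx.
rewrite /x mulmxBl -!rowE !mxE iuK iwK eqxx (negbTE iuw) /=.
have [hirr _] := hg.
rewrite (negbTE (hirr x0)) eqxx subr0 mulr1 sub0r => E.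
move: rpos; rewrite -E oppr_gt0 => /(le_lt_trans (ler0n _ _)).
by rewrite ltxx.
Qed.
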